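(* Let $T(n) = (3n+1)/2^{v_2(3n+1)}$ for odd $n \ge 1$. Let $n = 64a + r$ with integer $a \ge 0$ and $r \in \{1,9,17,25,33,41,49,57\}$. Then: (i) if $r \in \{1,17,33,49\}$, then $T(n) \equiv 1 \pmod 4$ (the burst continues, $L \ge 2$); (ii) if $r \in \{9,41\}$, then $T(n) \equiv 3 \pmod 4$ (so $L = 1$), $n \equiv 9 \pmod{32}$, and $T(T(n)) \equiv 3 \pmod 4$ (so $G \ge 2$), for every $a$; (iii) if $r \in \{25,57\}$, then $T(n) \equiv 3 \pmod 4$ (so $L=1$), $n \equiv 25 \pmod{32}$, and $T(T(n)) \equiv 1 \pmod 4$ (so $G = 1$), for every $a$.
   Context: $v_2$ is the $2$-adic valuation. For the orbit $n, T(n), T^2(n),\dots$ with burst indicator $X_t = \mathbf{1}[T^t(n) \equiv 1 \pmod 4]$, $L$ is the length of the burst run starting at $n$ and $G$ the length of the subsequent gap run. *)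

(* Defs.v *)
From mathcomp Require Import all_boot.

(* 2-adic valuation v_2(m) (logn 2 m, with the convention logn 2 0 = 0, irrelevant here). *)
Definition v2 (m : nat) : nat := logn 2 m.

Definition T (n : nat) : nat := (3 * n + 1) %/ 2 ^ v2 (3 * n + 1).

(* Main.v *)
Require Import Defs.
From mathcomp Require Import all_boot.
From mathcomp Require Import zify.

Lemma Tval m e k : odd k -> 3 * m + 1 = k * 2 ^ e -> T m = k.
Proof.
move=> ok H; rewrite /T /v2 H logn_Gauss ?coprime2n // pfactorK //.
by rewrite mulnK // expn_gt0.
Qed.

Lemma oddL a c : odd c -> odd (48 * a + c).
Proof. by move=> h; rewrite oddD oddM /= h. Qed.
Lemma oddL2 a c : odd c -> odd (72 * a + c).
Proof. by move=> h; rewrite oddD oddM /= h. Qed.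

Theorem proposition5p5 (a r : nat) :
  r \in [:: 1; 9; 17; 25; 33; 41; 49; 57] ->
  let n := 64 * a + r in
  [/\ (r \in [:: 1; 17; 33; 49] -> T n %% 4 = 1),
      (r \in [:: 9; 41] ->
         [/\ T n %% 4 = 3, n %% 32 = 9 & T (T n) %% 4 = 3])
    & (r \in [:: 25; 57] ->
         [/\ T n %% 4 = 3, n %% 32 = 25 & T (T n) %% 4 = 1])].
Proof.
rewrite !inE => Hr n; subst n.
case/orP: Hr => [/eqP ->|]; [|case/orP => [/eqP ->|]]; [| |case/orP => [/eqP ->|]];
  [| | |case/orP => [/eqP ->|]]; [| | | |case/orP => [/eqP ->|]];
  [| | | | |case/orP => [/eqP ->|]]; [| | | | | |case/orP => [/eqP ->|/eqP ->]];
  split => //= _.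
- by rewrite (@Tval _ 2 (48 * a + 1)) ?oddL //; lia.
- have E: T (64 * a + 9) = 48 * a + 7 by apply: (@Tval _ 2); [apply: oddL|lia].
  have E2: T (48 * a + 7) = 72 * a + 11 by apply: (@Tval _ 1); [apply: oddL2|lia].
  rewrite E E2; split; lia.
- by rewrite (@Tval _ 2 (48 * a + 13)) ?oddL //; lia.
- have E: T (64 * a + 25) = 48 * a + 19 by apply: (@Tval _ 2); [apply: oddL|lia].
  have E2: T (48 * a + 19) = 72 * a + 29 by apply: (@Tval _ 1); [apply: oddL2|lia].
  rewrite E E2; split; lia.
- by rewrite (@Tval _ 2 (48 * a + 25)) ?oddL //; lia.
- have E: T (64 * a + 41) = 48 * a + 31 by apply: (@Tval _ 2); [apply: oddL|lia].
  have E2: T (48 * a + 31) = 72 * a + 47 by apply: (@Tval _ 1); [apply: oddL2|lia].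
  rewrite E E2; split; lia.
- by rewrite (@Tval _ 2 (48 * a + 37)) ?oddL //; lia.
- have E: T (64 * a + 57) = 48 * a + 43 by apply: (@Tval _ 2); [apply: oddL|lia].
  have E2: T (48 * a + 43) = 72 * a + 65 by apply: (@Tval _ 1); [apply: oddL2|lia].
  rewrite E E2; split; lia.
Qed.
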